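(* Let $\lambda,\mu$ be partitions and $x$ an indeterminate. Put $$X_{\lambda\mu}(x):=\prod_{(i,j)\in[\mu]}(j-i-x)\prod_{(i,j)\in [\lambda]}\biggl((j-i-\mu_1+x)\prod_{1\le k\le\mu_1}\frac{j-i+\bar{\mu}_k-k+1+x}{j-i+\bar{\mu}_k-k+x}\biggr)$$ and, for a non-negative integer $L$, $$Y^{L}_{\lambda\mu}(x):=(-1)^{\binom L2}x^L\,\frac{\displaystyle\prod_{a\in B_L^\lambda}\prod_{1\leq i\leq a}(i+x)\prod_{b\in B_L^\mu}\prod_{1\le j\le b}(j-x)}{\displaystyle\prod_{(a,b)\in B_L^\lambda\times B_L^\mu}(a-b+x)}.$$ Then $X_{\lambda\mu}(x)=Y^L_{\lambda\mu}(x)$ for every integer $L\geq \max\{\ell(\lambda), \ell(\mu)\}$.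
   Context: For a partition $\lambda=(\lambda_1\ge\lambda_2\ge\cdots)$, $\ell(\lambda)$ is the number of nonzero parts, $[\lambda]=\{(i,j): i\ge1,\ 1\le j\le\lambda_i\}$ is its diagram, and $\bar\lambda$ is the conjugate partition ($\bar\lambda_k$ = number of $i$ with $\lambda_i\ge k$). For an integer $L\ge\ell(\lambda)$, the set of $L$-beta numbers of $\lambda$ is $B^\lambda_L=\{\lambda_i+L-i : 1\le i\le L\}$ (with $\lambda_i=0$ for $i>\ell(\lambda)$). *)

(* Defs.v *)
From HB Require Import structures.
From mathcomp Require Import all_boot all_order all_algebra.
Set Implicit Arguments. Unset Strict Implicit. Unset Printing Implicit Defensive.
Import Order.TTheory GRing.Theory Num.Theory.
Local Open Scope ring_scope.

Definition is_partition (s : seq nat) : bool :=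
  sorted geq s && all (fun m => (0 < m)%N) s.

Definition plen (s : seq nat) : nat := size s.

(* lambda_i, 1-indexed, with lambda_i = 0 for i > l(lambda) *)
Definition part (s : seq nat) (i : nat) : nat := nth 0%N s i.-1.

Definition conjp (s : seq nat) (k : nat) : nat := count (fun m => (k <= m)%N) s.

(* L-beta numbers B^lambda_L = { lambda_i + L - i : 1 <= i <= L } (listed, all distinct) *)
Definition beta (L : nat) (s : seq nat) : seq nat :=
  [seq (part s i + L - i)%N | i <- iota 1 L].

Definition RF := {fraction {poly rat}}.
Definition xx : RF := tofrac 'X.

Definition prod_diag (s : seq nat) (F : nat -> nat -> RF) : RF :=
  \prod_(i <- iota 1 (plen s)) \prod_(j <- iota 1 (part s i)) F i j.

Definition Xlm (lam mu : seq nat) : RF :=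
  prod_diag mu (fun i j => j%:R - i%:R - xx) *
  prod_diag lam (fun i j =>
    (j%:R - i%:R - (part mu 1)%:R + xx) *
    \prod_(k <- iota 1 (part mu 1))
       ((j%:R - i%:R + (conjp mu k)%:R - k%:R + 1 + xx) /
        (j%:R - i%:R + (conjp mu k)%:R - k%:R + xx))).

Definition Ylm (L : nat) (lam mu : seq nat) : RF :=
  (-1) ^+ 'C(L, 2) * xx ^+ L *
  ((\prod_(a <- beta L lam) \prod_(i <- iota 1 a) (i%:R + xx)) *
   (\prod_(b <- beta L mu) \prod_(j <- iota 1 b) (j%:R - xx)))
  / \prod_(a <- beta L lam) \prod_(b <- beta L mu) (a%:R - b%:R + xx).

(* Main.v *)
Require Import Defs.
From HB Require Import structures.
From mathcomp Require Import all_boot all_order all_algebra.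
From mathcomp Require Import ring.
Set Implicit Arguments. Unset Strict Implicit. Unset Printing Implicit Defensive.
Import Order.TTheory GRing.Theory Num.Theory.
Local Open Scope ring_scope.

Definition Pf (F : fieldType) (x : F) (a : nat) : F := \prod_(i <- iota 1 a) (i%:R + x).
Definition Qf (F : fieldType) (x : F) (b : nat) : F := \prod_(j <- iota 1 b) (j%:R - x).
Definition Yg (F : fieldType) (x : F) (L : nat) (B C : seq nat) : F :=
  (-1) ^+ 'C(L, 2) * x ^+ L *
  ((\prod_(a <- B) Pf x a) * (\prod_(b <- C) Qf x b))
  / \prod_(a <- B) \prod_(b <- C) (a%:R - b%:R + x).
Definition Hf (F : fieldType) (x : F) (C : seq nat) (a : nat) : F :=
  Pf x a / \prod_(b <- C) (a%:R - b%:R + x).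
Definition gf (F : fieldType) (x : F) (C : seq nat) (a : nat) : F :=
  (a%:R + x) * \prod_(b <- C) ((a%:R - 1 - b%:R + x) / (a%:R - b%:R + x)).
Definition fX (F : fieldType) (x : F) (mu : seq nat) (c : F) : F :=
  (c - (part mu 1)%:R + x) *
    \prod_(k <- iota 1 (part mu 1))
       ((c + (conjp mu k)%:R - k%:R + 1 + x) /
        (c + (conjp mu k)%:R - k%:R + x)).

Definition goodx (F : fieldType) (x : F) := forall n m : nat, x + n%:R - m%:R != 0.

Lemma Ylm_Yg L lam mu : Ylm L lam mu = Yg xx L (beta L lam) (beta L mu).
Proof. by []. Qed.

Lemma goodxx : goodx xx.
Proof.
move=> n m; rewrite /xx.
have -> : tofrac ('X : {poly rat}) + n%:R - m%:R = tofrac ('X + (n%:R - m%:R)%:P).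
  by rewrite rmorphD /= polyCB rmorphB /= !polyC_natr !rmorph_nat addrA.
by rewrite tofrac_eq0 -size_poly_eq0 size_XaddC.
Qed.

Lemma goodN (F : fieldType) (x : F) : goodx x -> goodx (- x).
Proof.
move=> Hx n m; have := Hx m n; apply: contra => /eqP H.
apply/eqP; have -> : x + m%:R - n%:R = - (- x + n%:R - m%:R) by ring.
by rewrite H oppr0.
Qed.

Lemma nzD (F : fieldType) (x : F) : goodx x -> forall a b : nat, a%:R - b%:R + x != 0.
Proof.
move=> Hx a b; have := Hx a b; suff -> : a%:R - b%:R + x = x + a%:R - b%:R by [].
ring.
Qed.


Lemma natS (F : fieldType) (n : nat) : (n.+1%:R : F) = n%:R + 1.
Proof. by rewrite -addn1 natrD. Qed.

Lemma iotaSr m n : iota m n.+1 = iota m n ++ [:: (m + n)%N].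
Proof. by rewrite -addn1 iotaD. Qed.

Lemma PfS (F : fieldType) (x : F) a : Pf x a.+1 = Pf x a * (a.+1%:R + x).
Proof. by rewrite /Pf iotaSr big_cat big_seq1 add1n. Qed.

Lemma prodD_neq0 (F : fieldType) (x : F) (C : seq nat) a :
  goodx x -> \prod_(b <- C) (a%:R - b%:R + x) != 0.
Proof.
move=> Hx; rewrite prodf_seq_neq0; apply/allP => b _ /=; exact: nzD.
Qed.

Lemma Hstep (F : fieldType) (x : F) C a : goodx x ->
  Hf x C a.+1 = Hf x C a * gf x C a.+1.
Proof.
move=> Hx; rewrite /Hf /gf PfS prodf_div.
have E : \prod_(b <- C) (a.+1%:R - 1 - b%:R + x) = \prod_(b <- C) (a%:R - b%:R + x).
  by apply: eq_bigr => b _; rewrite natS; ring.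
rewrite E.
have h1 := prodD_neq0 C a Hx; have h2 := prodD_neq0 C a.+1 Hx.
field; by rewrite h1 h2.
Qed.

Lemma Htel (F : fieldType) (x : F) C a n : goodx x ->
  Hf x C (a + n) = Hf x C a * \prod_(j <- iota 1 n) gf x C (a + j).
Proof.
move=> Hx; elim: n => [|n IH]; first by rewrite addn0 big_nil mulr1.
rewrite addnS Hstep // IH iotaSr big_cat big_seq1 add1n addnS.
exact: esym (mulrA _ _ _).
Qed.

Lemma YgE (F : fieldType) (x : F) L B C :
  Yg x L B C = (-1) ^+ 'C(L, 2) * x ^+ L * (\prod_(a <- B) Hf x C a) * \prod_(b <- C) Qf x b.
Proof. rewrite /Yg /Hf prodf_div; ring. Qed.

Lemma Step1 (F : fieldType) (x : F) L lam C : goodx x ->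
  Yg x L (beta L lam) C = Yg x L (beta L [::]) C *
    \prod_(i <- iota 1 L) \prod_(j <- iota 1 (part lam i)) gf x C (L - i + j).
Proof.
move=> Hx; rewrite !YgE /beta !big_map.
have E : \prod_(i <- iota 1 L) Hf x C (part lam i + L - i) =
   \prod_(i <- iota 1 L) (Hf x C (L - i) * \prod_(j <- iota 1 (part lam i)) gf x C (L - i + j)).
  rewrite big_seq [RHS]big_seq; apply: eq_bigr => i; rewrite mem_iota => /andP[_ Hi].
  rewrite -addnBA; last by rewrite -ltnS -(add1n L).
  by rewrite addnC Htel.
rewrite E big_split /=.
have E2 : \prod_(i <- iota 1 L) Hf x C (part [::] i + L - i) = \prod_(i <- iota 1 L) Hf x C (L - i).
  by apply: eq_bigr => i _; rewrite /part nth_nil add0n.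
rewrite E2; ring.
Qed.


Lemma tel (F : fieldType) (h : nat -> F) a n : (forall k, h k != 0) ->
  \prod_(k <- iota a n) (h k / h k.+1) = h a / h (a + n)%N.
Proof.
move=> Hh; elim: n => [|n IH]; first by rewrite big_nil addn0 divff.
rewrite iotaSr big_cat big_seq1 IH addnS; have := Hh (a + n)%N; have := Hh a.
move=> h1 h2; change (h a / h (a+n)%N * (h (a+n)%N / h (a+n).+1) = h a / h (a+n).+1).
by rewrite mulrA divfK.
Qed.

Definition goodc (F : fieldType) (x c : F) := forall n m : nat, c + x + n%:R - m%:R != 0.

Definition Rhs (F : fieldType) (x : F) (mu : seq nat) (L : nat) (c : F) :=
  (c + L%:R + x) * \prod_(m <- iota 1 L)
    ((c + m%:R - 1 - (part mu m)%:R + x) / (c + m%:R - (part mu m)%:R + x)).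

Lemma goodc1 (F : fieldType) (x c : F) : goodc x c -> goodc x (c + 1).
Proof.
move=> Hc n m; have := Hc n.+1 m; suff -> : c + 1 + x + n%:R - m%:R = c + x + n.+1%:R - m%:R by [].
rewrite natS; ring.
Qed.

Lemma goodc_nz (F : fieldType) (x c : F) (e : F) (n m : nat) : goodc x c ->
  e = c + x + n%:R - m%:R -> e != 0.
Proof. by move=> Hc ->. Qed.

Lemma KEY0 (F : fieldType) (x : F) L c : goodc x c -> fX x [::] c = Rhs x [::] L c.
Proof.
move=> Hc; rewrite /fX /Rhs /= big_nil mulr1.
have -> : iota 1 L = [seq (1 + i)%N | i <- iota 0 L] by rewrite -iotaDl.
rewrite big_map.
have E : \prod_(i <- iota 0 L) ((c + (1 + i)%:R - 1 - (part [::] (1 + i))%:R + x) /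
      (c + (1 + i)%:R - (part [::] (1 + i))%:R + x)) =
    \prod_(i <- iota 0 L) ((fun k : nat => c + x + k%:R - 0%:R) i / (fun k : nat => c + x + k%:R - 0%:R) i.+1).
  apply: eq_bigr => i _; rewrite /part nth_nil /= natrD natS; congr (_ / _); ring.
rewrite E tel; last by move=> k; exact: Hc.
rewrite add0n /=.
have h := Hc L 0%N; rewrite /part /=; field; by rewrite subr0 in h.
Qed.

Lemma geq_trans' : transitive geq.
Proof. by move=> a b c /= h1 h2; apply: leq_trans h2 h1. Qed.

Lemma ispart_cons r s : is_partition (r :: s) -> is_partition s /\ all (fun m => (m <= r)%N) s.
Proof.
rewrite /is_partition /= => /andP[Hs /andP[_ Ha]]; split.
  by rewrite (path_sorted Hs) Ha.
exact: (order_path_min geq_trans' Hs).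
Qed.

Lemma head_le r s : all (fun m => (m <= r)%N) s -> (part s 1 <= r)%N.
Proof. by case: s => //= a t /andP[]. Qed.

Lemma conjp0 s k : is_partition s -> (part s 1 < k)%N -> conjp s k = 0%N.
Proof.
case: s => [|a t] //= Hp Hk.
have [_ Ha] := ispart_cons Hp.
rewrite /conjp /= leqNgt Hk /=; apply/eqP; rewrite -leqn0 leqNgt -has_count.
apply/hasPn => m /(allP Ha) Hm; rewrite -ltnNge; exact: leq_ltn_trans Hm Hk.
Qed.

Lemma KEY (F : fieldType) (x : F) mu : forall L c, is_partition mu -> (size mu <= L)%N ->
  goodc x c -> fX x mu c = Rhs x mu L c.
Proof.
elim: mu => [|r mu IH] L c Hp HL Hc; first exact: KEY0.
case: L HL => // L HL.
have [Hp' Hall] := ispart_cons Hp.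
have Hr : (part mu 1 <= r)%N by apply: head_le.
have nz1 : c + 1 - (part mu 1)%:R + x != 0.
  by apply: (@goodc_nz _ x c _ 1 (part mu 1) Hc); ring.
have nz2 : c + 1 - r%:R + x != 0.
  by apply: (@goodc_nz _ x c _ 1 r Hc); ring.
have nz3 : c + 1 + L%:R + x != 0.
  by apply: (@goodc_nz _ x c _ L.+1 0 Hc); rewrite natS; ring.
have EL : fX x (r :: mu) c = (c - r%:R + x) * ((fX x mu (c + 1) / (c + 1 - (part mu 1)%:R + x)) *
     ((c + 1 - (part mu 1)%:R + x) / (c + 1 - r%:R + x))).
  rewrite {1}/fX.
  have -> : iota 1 (part (r :: mu) 1) = iota 1 (part mu 1) ++ iota (1 + part mu 1) (r - part mu 1).
    by rewrite -iotaD subnKC.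
  rewrite big_cat /=; congr (_ * (_ * _)).
    rewrite /fX [RHS]mulrC mulKf //; apply: eq_big_seq => k; rewrite mem_iota => /andP[_ Hk].
    have Hkr : (k <= r)%N by rewrite -ltnS; apply: leq_trans Hk _; rewrite add1n ltnS.
    rewrite Hkr (_ : (true + conjp mu k)%N = (conjp mu k).+1) // natS; congr (_ / _); ring.
  transitivity (\prod_(k <- iota (1 + part mu 1) (r - part mu 1))
      ((c + x + 2%:R - k%:R) / (c + x + 2%:R - k.+1%:R))).
    apply: eq_big_seq => k; rewrite mem_iota -addnA subnKC // => /andP[Hk1 Hk2].
    have Hkr : (k <= r)%N by rewrite -ltnS -(add1n r).
    rewrite Hkr conjp0 //.
    have -> : (((true + 0)%N)%:R : F) = 1 by [].
    rewrite natS; congr (_ / _); ring.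
  have := @tel F (fun k : nat => c + x + 2%:R - k%:R) (1 + part mu 1) (r - part mu 1).
  rewrite /= => ->; last by move=> k; exact: Hc.
  rewrite -addnA subnKC // !natrD; congr (_ / _); ring.
have ER : Rhs x (r :: mu) L.+1 c = (c + L.+1%:R + x) * ((c - r%:R + x) / (c + 1 - r%:R + x)) *
     (Rhs x mu L (c + 1) / (c + 1 + L%:R + x)).
  rewrite /Rhs.
  have -> : iota 1 L.+1 = 1%N :: [seq (1 + i)%N | i <- iota 1 L] by rewrite -iotaDl.
  rewrite big_cons big_map.
  have EP : \prod_(i <- iota 1 L) ((c + (1 + i)%:R - 1 - (part (r :: mu) (1 + i))%:R + x) /
              (c + (1 + i)%:R - (part (r :: mu) (1 + i))%:R + x)) =
            \prod_(m <- iota 1 L) ((c + 1 + m%:R - 1 - (part mu m)%:R + x) /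
              (c + 1 + m%:R - (part mu m)%:R + x)).
    apply: eq_big_seq => i; rewrite mem_iota => /andP[Hi _].
    case: i Hi => // i _.
    rewrite natrD; congr (_ / _); ring.
  rewrite EP /part /=; field; by rewrite nz2 nz3.
rewrite EL ER (IH L (c + 1) Hp' HL (goodc1 Hc)).
field; rewrite nz1 nz2 nz3 //.
Qed.


Lemma prodN (F : fieldType) (s : seq nat) (G : nat -> F) :
  \prod_(i <- s) (- G i) = (-1) ^+ size s * \prod_(i <- s) G i.
Proof.
elim: s => [|a s IH]; first by rewrite !big_nil mulr1.
rewrite !big_cons IH /= exprS; ring.
Qed.

Lemma prodc (F : fieldType) (s : seq nat) (c : F) : \prod_(i <- s) c = c ^+ size s.
Proof.
elim: s => [|a s IH]; first by rewrite big_nil.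
by rewrite big_cons IH /= exprS.
Qed.

Lemma size_beta L s : size (beta L s) = L.
Proof. by rewrite size_map size_iota. Qed.

Lemma prodDD_neq0 (F : fieldType) (x : F) (B C : seq nat) : goodx x ->
  \prod_(a <- B) \prod_(b <- C) (a%:R - b%:R + x) != 0.
Proof.
move=> Hx; rewrite prodf_seq_neq0; apply/allP => a _ /=; exact: prodD_neq0.
Qed.

Lemma Ysym (F : fieldType) (x : F) L B C : goodx x -> size B = L -> size C = L ->
  Yg (-x) L C B = Yg x L B C.
Proof.
move=> Hx HB HC; rewrite /Yg.
have E1 : \prod_(a <- C) Pf (- x) a = \prod_(b <- C) Qf x b by [].
have E2 : \prod_(b <- B) Qf (- x) b = \prod_(a <- B) Pf x a.
  apply: eq_bigr => b _; rewrite /Qf /Pf; apply: eq_bigr => j _; by rewrite opprK.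
have E3 : \prod_(a <- C) \prod_(b <- B) (a%:R - b%:R + - x) =
          (-1) ^+ L * \prod_(a <- B) \prod_(b <- C) (a%:R - b%:R + x).
  rewrite [in RHS]exchange_big /=.
  transitivity (\prod_(a <- C) ((-1) ^+ L * \prod_(b <- B) (b%:R - a%:R + x))).
    apply: eq_bigr => a _; rewrite -HB -prodN; apply: eq_bigr => b _; ring.
  rewrite big_split /= prodc HC -exprM -[(-1) ^+ (L * L)]signr_odd oddM andbb signr_odd //.
rewrite E1 E2 E3 [(- x) ^+ L]exprNn.
have h1 := prodDD_neq0 B C Hx.
have h2 : (-1) ^+ L != 0 :> F by rewrite signr_eq0.
field; by rewrite h1 h2.
Qed.

Lemma beta0 L : beta L [::] = rev (iota 0 L).
Proof.
rewrite /beta; elim: L => [|L IH] //.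
rewrite [iota 0 _]iotaSr rev_cat /= add0n subSS.
congr (_ :: _); first by rewrite subn0.
rewrite -IH.
have -> : iota 2 L = [seq (1 + i)%N | i <- iota 1 L] by rewrite -iotaDl.
rewrite -map_comp; apply: eq_map => i /=; by rewrite /part !nth_nil !add0n addSn subSS.
Qed.

Lemma reidx (F : fieldType) L (G : nat -> F) :
  \prod_(b <- iota 0 L) G b = \prod_(i <- iota 1 L) G (L - i)%N.
Proof.
rewrite -big_rev -beta0 /beta big_map; apply: eq_bigr => i _.
by rewrite /part nth_nil add0n.
Qed.

Lemma iota0S L : iota 0 L.+1 = iota 0 L ++ [:: L].
Proof. by rewrite iotaSr. Qed.

Lemma catP (F : fieldType) (s : seq nat) L (G : nat -> F) :
  \prod_(i <- s ++ [:: L]) G i = \prod_(i <- s) G i * G L.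
Proof. by rewrite big_cat big_seq1. Qed.

Lemma Ybase (F : fieldType) (x : F) L : goodx x -> Yg x L (beta L [::]) (beta L [::]) = 1.
Proof.
move=> Hx.
suff E : Yg x L (iota 0 L) (iota 0 L) = 1.
  rewrite -E /Yg beta0 !big_rev; congr (_ * _ / _).
  by apply: eq_bigr => a _; rewrite big_rev.
suff E : (-1) ^+ 'C(L, 2) * x ^+ L *
  ((\prod_(a <- iota 0 L) Pf x a) * (\prod_(b <- iota 0 L) Qf x b)) =
  \prod_(a <- iota 0 L) \prod_(b <- iota 0 L) (a%:R - b%:R + x).
  by rewrite /Yg E divff // prodDD_neq0.
elim: L => [|L IH]; first by rewrite !big_nil expr0 !mulr1.
have EP : \prod_(b <- iota 0 L) (L%:R - b%:R + x) = Pf x L.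
  rewrite reidx /Pf big_seq [RHS]big_seq; apply: eq_bigr => i; rewrite mem_iota => /andP[_ Hi].
  rewrite natrB; last by rewrite -ltnS -(add1n L).
  ring.
have EQ : \prod_(a <- iota 0 L) (a%:R - L%:R + x) = (-1) ^+ L * Qf x L.
  rewrite reidx /Qf -[in (-1) ^+ L](size_iota 1 L) -prodN big_seq [RHS]big_seq.
  apply: eq_bigr => i; rewrite mem_iota => /andP[_ Hi].
  rewrite natrB; last by rewrite -ltnS -(add1n L).
  ring.
rewrite !iota0S.
rewrite (@catP F (iota 0 L) L (Pf x)) (@catP F (iota 0 L) L (Qf x)).
rewrite (@catP F (iota 0 L) L (fun a => \prod_(b <- iota 0 L ++ [:: L]) (a%:R - b%:R + x))) /=.
have EI : \prod_(a <- iota 0 L) \prod_(b <- iota 0 L ++ [:: L]) (a%:R - b%:R + x) =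
   \prod_(a <- iota 0 L) (\prod_(b <- iota 0 L) (a%:R - b%:R + x) * (a%:R - L%:R + x)).
  by apply: eq_bigr => a _; exact: catP.
rewrite EI.
rewrite (@catP F (iota 0 L) L (fun b => L%:R - b%:R + x)) /=.
rewrite big_split /= EP EQ -IH (binS L 1) bin1 exprD exprS subrr add0r.
ring.
Qed.


Lemma KEYg (F : fieldType) (x : F) mu L i j : goodx x -> is_partition mu -> (size mu <= L)%N ->
  (i <= L)%N -> gf x (beta L mu) (L - i + j) = fX x mu (j%:R - i%:R).
Proof.
move=> Hx Hp HL Hi.
have Hc : goodc x (j%:R - i%:R).
  move=> n m; have := Hx (j + n)%N (i + m)%N.
  suff -> : j%:R - i%:R + x + n%:R - m%:R = x + (j + n)%N%:R - (i + m)%N%:R by [].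
  rewrite !natrD; ring.
rewrite (KEY (L := L)) // /gf /Rhs /beta big_map.
have E1 : (((L - i + j)%N)%:R : F) = L%:R - i%:R + j%:R by rewrite natrD natrB.
rewrite E1; congr (_ * _); first by ring.
apply: eq_big_seq => m; rewrite mem_iota => /andP[_ Hm].
have Hm' : (m <= L)%N by rewrite -ltnS -(add1n L).
have E2 : (((part mu m + L - m)%N)%:R : F) = (part mu m)%:R + L%:R - m%:R.
  by rewrite natrB ?natrD // (leq_trans Hm') // leq_addl.
rewrite E2; congr (_ / _); ring.
Qed.

Lemma trim (F : fieldType) (G : nat -> nat -> F) s L : (size s <= L)%N ->
  \prod_(i <- iota 1 L) \prod_(j <- iota 1 (part s i)) G i j =
  \prod_(i <- iota 1 (size s)) \prod_(j <- iota 1 (part s i)) G i j.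
Proof.
move=> HL; rewrite -(subnKC HL) iotaD big_cat /=.
rewrite [X in _ * X = _]big1_seq ?mulr1 // => i /= ; rewrite mem_iota => /andP[Hi _].
rewrite /part nth_default ?big_nil //.
by rewrite -ltnS prednK // (leq_trans _ Hi).
Qed.

Theorem lemma3p2 (lam mu : seq nat) (L : nat) :
  is_partition lam -> is_partition mu ->
  (maxn (plen lam) (plen mu) <= L)%N ->
  Xlm lam mu = Ylm L lam mu.
Proof.
move=> Hl Hm; rewrite geq_max => /andP[HlL HmL].
have Hx := goodxx.
have Hnx := goodN Hx.
rewrite Ylm_Yg Step1 //.
rewrite -(@Ysym _ xx L (beta L [::]) (beta L mu) Hx) ?size_beta //.
rewrite Step1 // Ybase // mul1r.
have P0 : is_partition [::] by [].
rewrite /Xlm /prod_diag /plen; congr (_ * _).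
  rewrite -(trim _ HmL); rewrite big_seq [RHS]big_seq; apply: eq_bigr => i; rewrite mem_iota.
  move=> /andP[_ Hi]; have Hi' : (i <= L)%N by rewrite -ltnS -(add1n L).
  apply: eq_bigr => j _; rewrite (@KEYg _ (- xx) [::] L i j Hnx P0) //.
  by rewrite /fX /= big_nil mulr1 subr0.
rewrite -(trim _ HlL); rewrite big_seq [RHS]big_seq; apply: eq_bigr => i; rewrite mem_iota.
move=> /andP[_ Hi]; have Hi' : (i <= L)%N by rewrite -ltnS -(add1n L).
apply: eq_bigr => j _; rewrite (@KEYg _ xx mu L i j Hx Hm) //.
Qed.
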